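(* Let $S_A>0$, $c_{\mathrm{TX}}>0$, $\phi>0$, $\theta=\phi/c_{\mathrm{TX}}$, let $B\geq 1$ be an integer, and let $\lambda$ satisfy $$0<\lambda\leq \lambda_{\mathrm{th}}\triangleq\frac{1}{\left(\sqrt{1+1/S_A}+\sqrt{\theta}\right)^2}.$$ Define $v_{\mathrm{th}}(\lambda,-1)\triangleq 0$, $t^*\triangleq\left\lceil\sqrt{\frac{1}{\lambda S_A}+\frac{1}{4}}-\frac{3}{2}\right\rceil$, and for integers $0\leq t\leq t^*$, $$v_{\mathrm{th}}(\lambda,t)\triangleq \frac{\sqrt{\lambda\theta}+\lambda\left(t+\frac{1}{2}\right)}{1-\lambda (t+1)tS_A}+\frac{\sqrt{\lambda}\sqrt{\sqrt{\lambda\theta}(2t+1)+\lambda \theta(t+1)tS_A+\frac{\lambda}{4}+\frac{1}{S_A}}}{1-\lambda(t+1)tS_A}.$$ Let $V_k\in(0,1]$ and let $(t^{(MP)}(V_k),S_M^{(MP)}(V_k))$ denote the myopic policy, i.e. a (possibly randomized among minimizers) minimizer over $t\in\{0,1,\dots,B\}$, $S_M\geq 0$ of $$F(t,S_M)=\hat\nu\left(V_k,\frac{tS_AS_M}{S_A+S_M}\right)+\lambda t(1+\theta S_M),\qquad \hat\nu(V,\Lambda)=\frac{V}{1+V\Lambda}.$$ Then: (i) if $V_k>v_{\mathrm{th}}(\lambda,t^* )$, then $t^{(MP)}(V_k)=\min\{t^*+1,B\}$; (ii) if $V_k=v_{\mathrm{th}}(\lambda,\hat t)$ for some $\hat t\in\{0,1,\dots,t^*\}$,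 then $t^{(MP)}(V_k)=\min\{\hat t+1,B\}$ with probability $p_{\hat t}$ and $t^{(MP)}(V_k)=\min\{\hat t,B\}$ otherwise, for some $p_{\hat t}\in[0,1]$ (both values minimize $F$); (iii) otherwise, $t^{(MP)}(V_k)=\min\{\hat t,B\}$, where $\hat t$ is the unique element of $\{0,1,\dots,t^*\}$ with $v_{\mathrm{th}}(\lambda,\hat t-1)<V_k<v_{\mathrm{th}}(\lambda,\hat t)$; (iv) in all cases, $$S_M^{(MP)}(V_k)=\left(\frac{1}{\sqrt{\lambda\theta}}-\frac{1}{V_k}\right)^+\frac{S_AV_k}{1+t^{(MP)}(V_k)S_AV_k}.$$
   Context: Model: a fusion center estimates a scalar Gaussian process; $V_k$ is the prior variance of the state at slot $k$. In the coordinated scheme (all sensors in the best accuracy state), the fusion center activates $t$ sensors, each measuring with local measurement SNR $S_M$; the aggregate SNR collected is $tS_AS_M/(S_A+S_M)$, where $S_A$ is the ambient SNR; the resulting posterior variance is $\hat\nu(V_k,\Lambda)=V_k/(1+V_k\Lambda)$. Each active sensor incurs cost $c_{\mathrm{TX}}+\phi S_M$; $\lambda\geq 0$ is a Lagrange multiplier, and the normalized cost of $t$ active sensors is $\lambda t(1+\theta S_M)$. $(x)^+=\max\{x,0\}$ and $\lceil\cdot\rceil$ is the ceiling. *)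

(* Defs.v *)
From HB Require Import structures.
From mathcomp Require Import all_boot all_order all_algebra.
From mathcomp Require Import reals.
Set Implicit Arguments. Unset Strict Implicit. Unset Printing Implicit Defensive.
Import Order.TTheory GRing.Theory Num.Theory.
Local Open Scope ring_scope.

Section Defs.
Variable R : realType.

Definition nuhat (V Lam : R) : R := V / (1 + V * Lam).

Definition aggSNR (SA : R) (t : nat) (s : R) : R := t%:R * SA * s / (SA + s).

Definition Fobj (lam theta SA V : R) (t : nat) (s : R) : R :=
  nuhat V (aggSNR SA t s) + lam * t%:R * (1 + theta * s).

Definition is_myopic_min (lam theta SA V : R) (B : nat) (t : nat) (s : R) : Prop :=
  (t <= B)%N /\ 0 <= s /\
  forall (t' : nat) (s' : R), (t' <= B)%N -> 0 <= s' ->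
    Fobj lam theta SA V t s <= Fobj lam theta SA V t' s'.

Definition lam_th (theta SA : R) : R :=
  1 / (Num.sqrt (1 + 1 / SA) + Num.sqrt theta) ^+ 2.

Definition tstar (lam SA : R) : int :=
  Num.ceil (Num.sqrt (1 / (lam * SA) + 1 / 4) - 3 / 2).

Definition vth (lam theta SA : R) (t : int) : R :=
  if t < 0 then 0 else
  let tr : R := t%:~R in
  let den := 1 - lam * (tr + 1) * tr * SA in
  (Num.sqrt (lam * theta) + lam * (tr + 1 / 2)) / den
  + Num.sqrt lam *
      Num.sqrt (Num.sqrt (lam * theta) * (2 * tr + 1)
                + lam * theta * (tr + 1) * tr * SA + lam / 4 + 1 / SA) / den.

Definition SMopt (lam theta SA V : R) (t : nat) : R :=
  Num.max 0 (1 / Num.sqrt (lam * theta) - 1 / V) * (SA * V / (1 + t%:R * SA * V)).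

(* The set of myopic decisions is exactly {(t, SMopt t) : T t}, up to the
   fact that for t = 0 the value of S_M is irrelevant to F. *)
Definition myopic_char (lam theta SA V : R) (B : nat) (T : nat -> Prop) : Prop :=
  (forall (t : nat) (s : R), is_myopic_min lam theta SA V B t s ->
      T t /\ (t <> 0%N -> s = SMopt lam theta SA V t)) /\
  (forall t : nat, T t -> is_myopic_min lam theta SA V B t (SMopt lam theta SA V t)).

End Defs.

(* Main.v *)
Require Import Defs.
From HB Require Import structures.
From mathcomp Require Import all_boot all_order all_algebra.
From mathcomp Require Import reals.
From mathcomp Require Import zify ring lra.
Import Order.TTheory GRing.Theory Num.Theory.
Local Open Scope ring_scope.

Module Helpers.
Set Implicit Arguments. Unset Strict Implicit.


Definition Gf (R : realType) (lam SA V k : R) (t : nat) : R :=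
  if k <= V then 2*k - k^+2/V + (V-k)^+2/(V*(1 + t%:R*SA*V)) + lam*t%:R
  else V + lam*t%:R.

Lemma F_id_ge (R : realType) (lam SA V k s : R) (t : nat) :
  0 < SA -> 0 < lam -> 0 < k -> 0 < V -> 0 <= s ->
  Fobj lam (k^+2/lam) SA V t s =
  2*k - k^+2/V + (V-k)^+2/(V*(1 + t%:R*SA*V)) + lam*t%:R +
  t%:R * ((SA*V - k*(SA + s*(1 + t%:R*SA*V)))^+2 /
          ((SA + s*(1 + t%:R*SA*V)) * (1 + t%:R*SA*V))).
Proof.
move=> hSA hl hk hV hs.
have ht : 0 <= (t%:R : R) by [].
have hc : 0 < 1 + t%:R*SA*V.
  by have := mulr_ge0 (mulr_ge0 ht (ltW hSA)) (ltW hV); lra.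
have hw : 0 < SA + s*(1 + t%:R*SA*V).
  by have := mulr_ge0 hs (ltW hc); lra.
have hs' : 0 < SA + s by lra.
rewrite /Fobj /nuhat /aggSNR.
have -> : 1 + V * (t%:R * SA * s / (SA + s)) = (SA + s*(1 + t%:R*SA*V))/(SA+s).
  by field; rewrite gt_eqF.
field.
by rewrite !gt_eqF // mulr_gt0.
Qed.

Lemma F_id_lt (R : realType) (lam SA V k s : R) (t : nat) :
  0 < SA -> 0 < lam -> 0 < k -> 0 < V -> 0 <= s ->
  Fobj lam (k^+2/lam) SA V t s =
  V + lam*t%:R +
  t%:R * (s * (k^+2 * (SA + s*(1 + t%:R*SA*V)) - SA * V^+2) /
          (SA + s*(1 + t%:R*SA*V))).
Proof.
move=> hSA hl hk hV hs.
have ht : 0 <= (t%:R : R) by [].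
have hc : 0 < 1 + t%:R*SA*V.
  by have := mulr_ge0 (mulr_ge0 ht (ltW hSA)) (ltW hV); lra.
have hw : 0 < SA + s*(1 + t%:R*SA*V).
  by have := mulr_ge0 hs (ltW hc); lra.
have hs' : 0 < SA + s by lra.
rewrite /Fobj /nuhat /aggSNR.
have -> : 1 + V * (t%:R * SA * s / (SA + s)) = (SA + s*(1 + t%:R*SA*V))/(SA+s).
  by field; rewrite gt_eqF.
field.
by rewrite !gt_eqF.
Qed.

Lemma sqrt_k (R : realType) (lam k : R) : 0 < lam -> 0 < k ->
  Num.sqrt (lam * (k^+2/lam)) = k.
Proof.
move=> hl hk.
have -> : lam * (k^+2/lam) = k^+2 by field; rewrite gt_eqF.
by rewrite sqrtr_sqr gtr0_norm.
Qed.

Lemma Fchar (R : realType) (lam SA V k : R) (t : nat) :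
  0 < SA -> 0 < lam -> 0 < k -> 0 < V ->
  [/\ (forall s, 0 <= s -> Gf lam SA V k t <= Fobj lam (k^+2/lam) SA V t s),
      0 <= SMopt lam (k^+2/lam) SA V t,
      Fobj lam (k^+2/lam) SA V t (SMopt lam (k^+2/lam) SA V t) = Gf lam SA V k t &
      (forall s, 0 <= s -> t <> 0%N -> Fobj lam (k^+2/lam) SA V t s = Gf lam SA V k t ->
          s = SMopt lam (k^+2/lam) SA V t)].
Proof.
move=> hSA hl hk hV.
have ht : 0 <= (t%:R : R) by [].
set c := 1 + t%:R*SA*V.
have hc : 0 < c.
  by have := mulr_ge0 (mulr_ge0 ht (ltW hSA)) (ltW hV); rewrite /c; lra.
have hw : forall s : R, 0 <= s -> 0 < SA + s*c.
  by move=> s hs; have := mulr_ge0 hs (ltW hc); lra.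
rewrite /SMopt sqrt_k // /Gf -/c.
case: (lerP k V) => hkV.
- have e1 : 1/k - 1/V = (V-k)/(k*V) by field; rewrite !gt_eqF.
  have h1 : 0 <= 1/k - 1/V by rewrite e1 divr_ge0 ?subr_ge0 // mulr_ge0 // ltW.
  have em : Num.max 0 (1/k - 1/V) = 1/k - 1/V by rewrite max_r.
  rewrite em.
  have hs0 : 0 <= (1/k - 1/V) * (SA*V/c) by rewrite mulr_ge0 // divr_ge0 // ?mulr_ge0 // ltW.
  split => //.
  + move=> s hs; rewrite F_id_ge // -/c ler_wpDr // mulr_ge0 //.
    by rewrite divr_ge0 ?sqr_ge0 // mulr_ge0 // ltW ?hw.
  + rewrite F_id_ge // -/c.
    have -> : SA*V - k*(SA + (1/k - 1/V) * (SA*V/c) * c) = 0.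
      by field; rewrite !gt_eqF.
    by rewrite expr0n /= mul0r mulr0 addr0.
  + move=> s hs ht0; rewrite F_id_ge // -/c => /eqP.
    rewrite -subr_eq0 addrC addKr mulf_eq0 (negbTE (_ : t%:R != 0 :> R)); last first.
      by rewrite pnatr_eq0; apply/eqP.
    have hwc : (SA + s*c)*c != 0 by rewrite gt_eqF // mulr_gt0 ?hw.
    rewrite /= mulf_eq0 invr_eq0 (negbTE hwc) orbF expf_eq0 /= => /eqP hX.
    have hsk : s = (SA*V - k*SA)/(k*c).
      apply: (mulIf (_ : k*c != 0)); first by rewrite gt_eqF // mulr_gt0.
      rewrite divfK ?gt_eqF ?mulr_gt0 //.
      by move: hX; rewrite mulrDr; lra.
    by rewrite hsk; field; rewrite !gt_eqF.
- have h1 : 1/k - 1/V < 0.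
    have e1 : 1/k - 1/V = - ((k-V)/(k*V)) by field; rewrite !gt_eqF.
    by rewrite e1 oppr_lt0 divr_gt0 ?subr_gt0 // mulr_gt0.
  have em : Num.max 0 (1/k - 1/V) = 0 by rewrite max_l // ltW.
  rewrite em mul0r.
  have hY : forall s : R, 0 <= s -> 0 < k^+2 * (SA + s*c) - SA * V^+2.
    move=> s hs.
    have hV2 : V^+2 < k^+2 by nra.
    have := mulr_ge0 (mulr_ge0 hs (ltW hc)) (ltW (exprn_gt0 2 hk)).
    have h2 : 0 < k^+2 - V^+2 by rewrite subr_gt0.
    have := mulr_gt0 hSA h2.
    lra.
  split => //.
  + move=> s hs; rewrite F_id_lt // -/c ler_wpDr // mulr_ge0 //; last first.
    by apply: divr_ge0; [apply: mulr_ge0 => //; exact: ltW (hY s hs) | exact: ltW (hw s hs)].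
  + by rewrite F_id_lt // -/c !mul0r mulr0 addr0.
  + move=> s hs ht0; rewrite F_id_lt // -/c => /eqP.
    rewrite -subr_eq0 addrC addKr mulf_eq0 (negbTE (_ : t%:R != 0 :> R)); last first.
      by rewrite pnatr_eq0; apply/eqP.
    have hYw : (k^+2 * (SA + s*c) - SA * V^+2) / (SA + s*c) != 0.
      by rewrite gt_eqF // divr_gt0 ?hY ?hw.
    by rewrite /= -mulrA mulf_eq0 (negbTE hYw) orbF => /eqP.
Qed.

Lemma myopic_red (R : realType) (lam SA V k : R) (B : nat) (T : nat -> Prop) :
  0 < SA -> 0 < lam -> 0 < k -> 0 < V ->
  (forall t, T t -> (t <= B)%N) ->
  (forall t, (t <= B)%N ->
     ((forall t', (t' <= B)%N -> Gf lam SA V k t <= Gf lam SA V k t') <-> T t)) ->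
  myopic_char lam (k^+2/lam) SA V B T.
Proof.
move=> hSA hl hk hV hTB hT.
have FC := fun t => Fchar t hSA hl hk hV.
split.
- move=> t s [htB [hs hmin]].
  have [Fge _ Feq Funiq] := FC t.
  have hGt : forall t', (t' <= B)%N -> Gf lam SA V k t <= Gf lam SA V k t'.
    move=> t' ht'; have [_ hs' Feq' _] := FC t'.
    apply: le_trans (Fge s hs) _; rewrite -Feq'; exact: hmin.
  split; first by apply: (proj1 (hT t htB)).
  move=> ht0; apply: Funiq => //.
  apply/eqP; rewrite eq_le Fge // andbT.
  have [_ hs' _ _] := FC t.
  by rewrite -Feq; apply: hmin.
- move=> t Tt; have htB := hTB t Tt.
  have [_ hs0 Feq _] := FC t.
  split => //; split => // t' s' ht' hs'.
  have [Fge' _ _ _] := FC t'.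
  rewrite Feq; apply: le_trans (Fge' s' hs').
  by apply: (proj2 (hT t htB) Tt).
Qed.

Definition Df (R : realType) (lam SA V k : R) (t : nat) : R :=
  Gf lam SA V k t - Gf lam SA V k t.+1.

Lemma Dlt (R : realType) (lam SA V k : R) (t : nat) : V < k -> Df lam SA V k t = - lam.
Proof.
by move=> hVk; rewrite /Df /Gf !leNgt hVk /= -natr1; ring.
Qed.

Lemma Dge (R : realType) (lam SA V k : R) (t : nat) :
  0 < SA -> 0 < V -> k <= V ->
  Df lam SA V k t = (V-k)^+2*SA/((1 + t%:R*SA*V)*(1 + (t%:R+1)*SA*V)) - lam.
Proof.
move=> hSA hV hkV.
have ht : 0 <= (t%:R : R) by [].
have hc : 0 < 1 + t%:R*SA*V.
  by have := mulr_ge0 (mulr_ge0 ht (ltW hSA)) (ltW hV); lra.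
have hc1 : 0 < 1 + (t%:R+1)*SA*V.
  by have := mulr_ge0 (mulr_ge0 ht (ltW hSA)) (ltW hV); have := mulr_gt0 hSA hV; lra.
rewrite /Df /Gf hkV -natr1.
by field; rewrite !gt_eqF.
Qed.

Lemma Dmono (R : realType) (lam SA V k : R) (t : nat) :
  0 < SA -> 0 < V -> Df lam SA V k t.+1 <= Df lam SA V k t.
Proof.
move=> hSA hV.
case: (lerP k V) => hkV; last by rewrite !Dlt.
have ht : 0 <= (t%:R : R) by [].
have hc : 0 < 1 + t%:R*SA*V.
  by have := mulr_ge0 (mulr_ge0 ht (ltW hSA)) (ltW hV); lra.
have hc1 : 0 < 1 + (t%:R+1)*SA*V.
  by have := mulr_ge0 (mulr_ge0 ht (ltW hSA)) (ltW hV); have := mulr_gt0 hSA hV; lra.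
have hc2 : 0 < 1 + (t%:R+1+1)*SA*V.
  by have := mulr_ge0 (mulr_ge0 ht (ltW hSA)) (ltW hV); have := mulr_gt0 hSA hV; lra.
rewrite -subr_ge0 !Dge // -natr1.
have -> : (V - k) ^+ 2 * SA / ((1 + t%:R * SA * V) * (1 + (t%:R + 1) * SA * V)) - lam -
  ((V - k) ^+ 2 * SA / ((1 + (t%:R + 1) * SA * V) * (1 + (t%:R + 1 + 1) * SA * V)) - lam)
  = (V-k)^+2 * SA * (2 * SA * V) / ((1 + t%:R * SA * V) * (1 + (t%:R + 1) * SA * V) * (1 + (t%:R + 1 + 1) * SA * V)).
  by field; rewrite !gt_eqF.
have hp : 0 < 2 * SA * V by rewrite !mulr_gt0.
apply: divr_ge0; first by apply: mulr_ge0; [apply: mulr_ge0; [exact: sqr_ge0 | exact: ltW] | exact: ltW].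
by rewrite ltW // !mulr_gt0.
Qed.

Lemma Dstrict (R : realType) (lam SA V k : R) (t : nat) :
  0 < SA -> 0 < V -> k < V -> Df lam SA V k t.+1 < Df lam SA V k t.
Proof.
move=> hSA hV hkV.
have ht : 0 <= (t%:R : R) by [].
have hc : 0 < 1 + t%:R*SA*V.
  by have := mulr_ge0 (mulr_ge0 ht (ltW hSA)) (ltW hV); lra.
have hc1 : 0 < 1 + (t%:R+1)*SA*V.
  by have := mulr_ge0 (mulr_ge0 ht (ltW hSA)) (ltW hV); have := mulr_gt0 hSA hV; lra.
have hc2 : 0 < 1 + (t%:R+1+1)*SA*V.
  by have := mulr_ge0 (mulr_ge0 ht (ltW hSA)) (ltW hV); have := mulr_gt0 hSA hV; lra.
rewrite -subr_gt0 !Dge ?ltW // -natr1.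
have -> : (V - k) ^+ 2 * SA / ((1 + t%:R * SA * V) * (1 + (t%:R + 1) * SA * V)) - lam -
  ((V - k) ^+ 2 * SA / ((1 + (t%:R + 1) * SA * V) * (1 + (t%:R + 1 + 1) * SA * V)) - lam)
  = (V-k)^+2 * SA * (2 * SA * V) / ((1 + t%:R * SA * V) * (1 + (t%:R + 1) * SA * V) * (1 + (t%:R + 1 + 1) * SA * V)).
  by field; rewrite !gt_eqF.
have hVk : 0 < V - k by rewrite subr_gt0.
by rewrite divr_gt0 ?mulr_gt0 ?exprn_gt0 // mulr_gt0.
Qed.

Section Comb.
Variable R : realType.
Variable G : nat -> R.
Let D t := G t - G t.+1.

Lemma chain_le (D' : nat -> R) : (forall i, D' i.+1 <= D' i) ->
  forall i j, (i <= j)%N -> D' j <= D' i.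
Proof.
move=> h i j /subnK <-; elim: (j - i)%N => [|n IH] //=.
by rewrite addSn; apply: le_trans (h _) IH.
Qed.

Lemma chain_lt (D' : nat -> R) : (forall i, D' i.+1 < D' i) ->
  forall i j, (i < j)%N -> D' j < D' i.
Proof.
move=> h i j /subnK <-; elim: (j - i.+1)%N => [|n IH] //=.
  by rewrite add0n h.
by rewrite addSn; apply: lt_trans (h _) IH.
Qed.

Lemma Gdec a : (forall i, (i < a)%N -> 0 < D i) ->
  forall t u, (t < u)%N -> (u <= a)%N -> G u < G t.
Proof.
move=> hD t; elim=> [|u IH] htu hua //.
have hu : G u.+1 < G u by have := hD u hua; rewrite /D subr_gt0.
case: (ltngtP t u) => [h|h|e]; last by rewrite e.
- by apply: lt_trans hu (IH h (ltnW hua)).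
- by move: htu; rewrite ltnS leqNgt h.
Qed.

Lemma Ginc a : (forall i, (a <= i)%N -> D i < 0) ->
  forall t u, (a <= t)%N -> (t < u)%N -> G t < G u.
Proof.
move=> hD t u hat; elim: u => [|u IH] htu //.
have hu : G u < G u.+1.
  have : (a <= u)%N by move: htu; rewrite ltnS => /(leq_trans hat).
  by move/hD; rewrite /D subr_lt0.
case: (ltngtP t u) => [h|h|e]; last by rewrite e.
- by apply: lt_trans (IH h) hu.
- by move: htu; rewrite ltnS leqNgt h.
Qed.

Lemma strict_min a B : (forall i, (i < a)%N -> 0 < D i) ->
  (forall i, (a <= i)%N -> D i < 0) ->
  forall t, (t <= B)%N -> ((forall t', (t' <= B)%N -> G t <= G t') <-> t = minn a B).
Proof.
move=> hdec hinc t htB.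
have key : forall t', (t' <= B)%N -> t' <> minn a B -> G (minn a B) < G t'.
  move=> t' ht' hne.
  case: (ltngtP t' (minn a B)) => h.
  - apply: (Gdec hdec) => //; exact: geq_minl.
  - apply: (Ginc hinc) => //; move: h ht'; lia.
  - by [].
split.
- move=> hmin; apply/eqP; apply/negPn/negP => /eqP hne.
  have := key t htB hne; rewrite ltNge hmin //; lia.
- move=> -> t' ht'.
  case: (eqVneq t' (minn a B)) => [->//|/eqP hne].
  exact/ltW/key.
Qed.

Lemma tie_min a B : (forall i, (i < a)%N -> 0 < D i) -> D a = 0 ->
  (forall i, (a < i)%N -> D i < 0) ->
  forall t, (t <= B)%N -> ((forall t', (t' <= B)%N -> G t <= G t') <->
                          (t = minn a.+1 B \/ t = minn a B)).
Proof.
move=> hdec hDa hinc t htB.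
have eqa : G a.+1 = G a by apply/eqP; rewrite eq_sym -subr_eq0; apply/eqP.
have key : forall t', (t' <= B)%N -> t' <> minn a B -> t' <> minn a.+1 B ->
    G (minn a B) < G t'.
  move=> t' ht' hne1 hne2.
  case: (ltngtP t' (minn a B)) => h.
  - apply: (Gdec hdec) => //; exact: geq_minl.
  - have ha : minn a B = a by move: h ht'; lia.
    rewrite ha -eqa; apply: (Ginc (a := a.+1)) => //; move: h ht' hne2; lia.
  - by [].
have eqm : G (minn a.+1 B) = G (minn a B).
  case: (leqP B a) => h.
  - by have -> : minn a.+1 B = B by lia; have -> : minn a B = B by lia.
  - by have -> : minn a.+1 B = a.+1 by lia; have -> : minn a B = a by lia.
split.
- move=> hmin.
  case: (eqVneq t (minn a B)) => [->|/eqP h1]; first by right.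
  case: (eqVneq t (minn a.+1 B)) => [->|/eqP h2]; first by left.
  have := key t htB h1 h2; rewrite ltNge hmin //; lia.
- have hm : forall t', (t' <= B)%N -> G (minn a B) <= G t'.
    move=> t' ht'.
    case: (eqVneq t' (minn a B)) => [->//|/eqP h1].
    case: (eqVneq t' (minn a.+1 B)) => [->|/eqP h2]; first by rewrite eqm.
    exact/ltW/key.
  by case=> ->; [rewrite eqm|]; exact: hm.
Qed.
End Comb.


Lemma vth_unf (R : realType) (lam SA k : R) (t : nat) : 0 < lam -> 0 < k ->
  vth lam (k^+2/lam) SA t%:Z =
  (k + lam * (t%:R + 1/2)) / (1 - lam * (t%:R + 1) * t%:R * SA)
  + Num.sqrt lam * Num.sqrt (k * (2 * t%:R + 1) + k^+2 * (t%:R + 1) * t%:R * SA + lam / 4 + 1 / SA)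
    / (1 - lam * (t%:R + 1) * t%:R * SA).
Proof.
move=> hl hk.
rewrite /vth /= sqrt_k //.
have -> : lam * (k^+2/lam) = k^+2 by field; rewrite gt_eqF.
done.
Qed.

Lemma vth_gt (R : realType) (lam SA k : R) (t : nat) : 0 < SA -> 0 < lam -> 0 < k ->
  0 < 1 - lam * (t%:R + 1) * t%:R * SA ->
  k < vth lam (k^+2/lam) SA t%:Z.
Proof.
move=> hSA hl hk hd.
rewrite vth_unf //.
set d := 1 - _.
set b := k + _.
set r := Num.sqrt lam * _.
have ht : 0 <= (t%:R : R) by [].
have hd1 : d <= 1.
  have := mulr_ge0 (mulr_ge0 (mulr_ge0 (ltW hl) (_ : 0 <= t%:R + 1)) ht) (ltW hSA).
  by rewrite /d; lra.
have hr : 0 <= r by rewrite /r mulr_ge0 ?sqrtr_ge0.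
have hb : k < b by rewrite /b ltrDl mulr_gt0 //; lra.
have e : b / d + r / d = b + (b * (1 - d) / d + r / d) by field; rewrite gt_eqF.
have hd0 : 0 < d by [].
have hb0 : 0 <= b by lra.
rewrite e; apply: (lt_le_trans hb); rewrite lerDl; apply: addr_ge0; apply: divr_ge0 => //; try lra.
apply: mulr_ge0; lra.
Qed.

Lemma quad_fact (R : realType) (d b e r y : R) : d != 0 -> r^+2 = b^+2 - d*e ->
  d*y^+2 - 2*b*y + e = d*(y - (b/d + r/d))*(y - (b-r)/d).
Proof.
move=> hd hr.
have -> : d*(y - (b/d + r/d))*(y - (b-r)/d) = d*y^+2 - 2*b*y + e + ((b^+2 - d*e) - r^+2)/d.
  by field.
by rewrite hr subrr mul0r addr0.
Qed.

Lemma Dsign (R : realType) (lam SA V k : R) (t : nat) :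
  0 < SA -> 0 < lam -> 0 < k -> 0 < V ->
  0 < 1 - lam * (t%:R + 1) * t%:R * SA ->
  exists2 c, 0 < c & Df lam SA V k t = c * (V - vth lam (k^+2/lam) SA t%:Z).
Proof.
move=> hSA hl hk hV hd.
have hvk := vth_gt hSA hl hk hd.
case: (lerP k V) => hkV; last first.
  rewrite Dlt //.
  have hp : 0 < vth lam (k^+2/lam) SA t%:Z - V by rewrite subr_gt0 (lt_trans hkV).
  exists (lam / (vth lam (k^+2/lam) SA t%:Z - V)); first by rewrite divr_gt0.
  by field; rewrite gt_eqF.
rewrite Dge // vth_unf //.
set d := 1 - _.
set b := k + _.
set X := k * _ + _ + _ + _.
set x := (t%:R : R).
have hx : 0 <= x by [].
have hX : 0 <= X.
  have h5 : 0 <= 2 * x + 1 by lra.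
  rewrite /X; have h1 := mulr_ge0 (ltW hk) h5.
  have h2 : 0 <= k^+2 * (x+1) * x * SA.
    by apply: mulr_ge0; [apply: mulr_ge0; [apply: mulr_ge0; [exact: sqr_ge0 | lra] | exact hx] | exact: ltW].
  have h3 : 0 <= lam / 4 by rewrite divr_ge0 ?ltW.
  have h4 : 0 <= 1 / SA by rewrite divr_ge0 ?ltW.
  lra.
set r := Num.sqrt lam * Num.sqrt X.
have hr : 0 <= r by rewrite /r mulr_ge0 ?sqrtr_ge0.
have hr2 : r^+2 = b^+2 - d * (k^+2 - lam/SA).
  rewrite /r exprMn sqr_sqrtr ?(ltW hl) // sqr_sqrtr // /X /b /d /x.
  by field; rewrite gt_eqF.
set e := k^+2 - lam/SA.
set v := b / d + r / d.
set vm := (b - r) / d.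
have hq : forall y, d*y^+2 - 2*b*y + e = d*(y - v)*(y - vm).
  by move=> y; apply: quad_fact; rewrite ?gt_eqF.
have hqk : d*k^+2 - 2*b*k + e < 0.
  have -> : d*k^+2 - 2*b*k + e = - (lam*x*(x+1)*SA*k^+2 + lam*(2*x+1)*k + lam/SA).
    by rewrite /d /b /e /x; field; rewrite gt_eqF.
  rewrite oppr_lt0.
  have hx1 : 0 <= x + 1 by lra.
  have hx2 : 0 <= 2*x + 1 by lra.
  have h1 : 0 <= lam*x*(x+1)*SA*k^+2.
    by apply: mulr_ge0; [apply: mulr_ge0; [apply: mulr_ge0; [apply: mulr_ge0; [exact: ltW|exact: hx]|exact: hx1]|exact: ltW]|exact: sqr_ge0].
  have h2 : 0 <= lam*(2*x+1)*k.
    by apply: mulr_ge0; [apply: mulr_ge0; [exact: ltW|exact: hx2]|exact: ltW].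
  have h3 : 0 < lam/SA by rewrite divr_gt0.
  lra.
have hvvm : vm <= v.
  rewrite -subr_ge0.
  have -> : v - vm = 2 * r / d by rewrite /v /vm; field; rewrite gt_eqF.
  have h2r : 0 <= 2 * r by lra.
  by apply: divr_ge0 => //; apply: ltW.
have hkvm : vm < k.
  rewrite ltNge; apply/negP => hk'.
  move: hqk; rewrite hq; apply/negP; rewrite -leNgt.
  have : k - v <= 0 by lra.
  have : k - vm <= 0 by lra.
  move=> h1 h2; rewrite -mulrA; apply: mulr_ge0; [exact: ltW hd | exact: mulr_le0 h2 h1].
have hc0 : 0 < 1 + x*SA*V by have := mulr_ge0 (mulr_ge0 hx (ltW hSA)) (ltW hV); lra.
have hc1 : 0 < 1 + (x+1)*SA*V.
  by have := mulr_ge0 (mulr_ge0 hx (ltW hSA)) (ltW hV); have := mulr_gt0 hSA hV; lra.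
exists (SA * d * (V - vm) / ((1 + x*SA*V) * (1 + (x+1)*SA*V))).
  by rewrite divr_gt0 ?mulr_gt0 // subr_gt0 (lt_le_trans hkvm).
rewrite -/v.
have -> : (V - k) ^+ 2 * SA / ((1 + x * SA * V) * (1 + (x + 1) * SA * V)) - lam
  = SA * (d*V^+2 - 2*b*V + e) / ((1 + x * SA * V) * (1 + (x + 1) * SA * V)).
  by rewrite /d /b /e /x; field; rewrite !gt_eqF.
by rewrite hq; field; rewrite !gt_eqF.
Qed.

Lemma Dneg (R : realType) (lam SA V k : R) (t : nat) :
  0 < SA -> 0 < lam -> 0 < k -> 0 < V ->
  1 <= lam * (t%:R + 1) * t%:R * SA -> Df lam SA V k t < 0.
Proof.
move=> hSA hl hk hV hd.
case: (lerP k V) => hkV; last by rewrite Dlt // oppr_lt0.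
rewrite Dge //.
set x := (t%:R : R).
have hx : 0 <= x by [].
have hc0 : 0 < 1 + x*SA*V by have := mulr_ge0 (mulr_ge0 hx (ltW hSA)) (ltW hV); lra.
have hc1 : 0 < 1 + (x+1)*SA*V.
  by have := mulr_ge0 (mulr_ge0 hx (ltW hSA)) (ltW hV); have := mulr_gt0 hSA hV; lra.
rewrite subr_lt0 ltr_pdivrMr ?mulr_gt0 //.
rewrite -subr_gt0.
have -> : lam * ((1 + x * SA * V) * (1 + (x + 1) * SA * V)) - (V - k) ^+ 2 * SA
  = lam + lam*(2*x+1)*SA*V + (lam*(x+1)*x*SA - 1)*(SA*V^+2) + SA*k*(2*V - k).
  by rewrite /x; ring.
have h1 : 0 <= lam*(2*x+1)*SA*V.
  have hx2 : 0 <= 2*x+1 by lra.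
  by apply: mulr_ge0; [apply: mulr_ge0; [apply: mulr_ge0; [exact: ltW|exact: hx2]|exact: ltW]|exact: ltW].
have h2 : 0 <= (lam*(x+1)*x*SA - 1)*(SA*V^+2).
  by apply: mulr_ge0; [rewrite subr_ge0 | apply: mulr_ge0; [exact: ltW|exact: sqr_ge0]].
have h3 : 0 < SA*k*(2*V - k) by rewrite !mulr_gt0 //; lra.
lra.
Qed.

Lemma intr_natB1 (R : realType) (t : nat) : ((t%:Z - 1)%:~R : R) = t%:R - 1.
Proof. by rewrite intrB. Qed.

Lemma ts_facts (R : realType) (lam SA : R) : 0 < SA -> 0 < lam ->
  [/\ 0 <= tstar lam SA,
      (forall t : nat, t%:Z <= tstar lam SA -> 0 < 1 - lam * (t%:R + 1) * t%:R * SA) &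
      (forall t : nat, tstar lam SA < t%:Z -> 1 <= lam * (t%:R + 1) * t%:R * SA)].
Proof.
move=> hSA hl.
rewrite /tstar.
set u := 1 / (lam * SA).
have hp : 0 < lam * SA by rewrite mulr_gt0.
have hu : u * (lam * SA) = 1 by rewrite /u div1r mulVf // gt_eqF.
have hu0 : 0 < u by rewrite /u divr_gt0.
set Z := u + 1/4.
have hZ : 0 <= Z by rewrite /Z; lra.
set s := Num.sqrt Z.
have hs0 : 0 <= s by rewrite sqrtr_ge0.
have hs2 : s^+2 = Z by rewrite sqr_sqrtr.
set C := Num.ceil (s - 3/2).
split.
- rewrite /C ceil_ge0.
  have : 1/4 < Z by rewrite /Z; lra.
  rewrite -hs2 => h; nra.
- move=> t ht.
  have : (t%:Z - 1 < C)%R by lia.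
  rewrite /C ceil_gt_int intr_natB1 => h.
  have hx : 0 <= (t%:R : R) by [].
  have h1 : (t%:R + 1/2)^+2 < Z by rewrite -hs2; nra.
  have h2 : t%:R * t%:R + t%:R < u by move: h1; rewrite /Z; nra.
  nra.
- move=> t ht.
  have : (C <= t%:Z - 1)%R by lia.
  rewrite /C ceil_le_int intr_natB1 => h.
  have hx : 0 <= (t%:R : R) by [].
  have h1 : Z <= (t%:R + 1/2)^+2 by rewrite -hs2; nra.
  have h2 : u <= t%:R * t%:R + t%:R by move: h1; rewrite /Z; nra.
  nra.
Qed.


Lemma minz_nat (a b : nat) : Order.min (a%:Z) (b%:Z) = (minn a b)%:Z.
Proof.
case: (leqP a b) => h.
- by apply: min_l; rewrite lez_nat.
- by apply: min_r; rewrite lez_nat ltnW.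
Qed.

Lemma main_k (R : realType) (lam SA V k : R) (B : nat) :
  0 < SA -> 0 < lam -> 0 < k -> 0 < V -> (1 <= B)%N ->
  let theta := k^+2/lam in
  let ts := tstar lam SA in
  let v := vth lam theta SA in
  (v ts < V ->
     myopic_char lam theta SA V B
       (fun t => t%:Z = Order.min (ts + 1) B%:Z)) /\
  (forall th : nat, th%:Z <= ts -> V = v th%:Z ->
     myopic_char lam theta SA V B
       (fun t => t = minn th.+1 B \/ t = minn th B)) /\
  (V <= v ts -> (forall th : nat, th%:Z <= ts -> V <> v th%:Z) ->
     exists th : nat,
       [/\ th%:Z <= ts, v (th%:Z - 1) < V /\ V < v th%:Z,
           (forall th' : nat, th'%:Z <= ts ->
              v (th'%:Z - 1) < V -> V < v th'%:Z -> th' = th) &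
           myopic_char lam theta SA V B (fun t => t = minn th B)]).
Proof.
move=> hSA hl hk hV hB theta ts v.
have [ts0 tsle tsgt] := ts_facts hSA hl.
rewrite /ts /v /theta.
case E: (tstar lam SA) ts0 => [n|n] // _.
rewrite -/(Posz n) in tsle tsgt *.
pose D := Df lam SA V k.
pose vv := vth lam (k^+2/lam) SA.
have FA : forall t, (t <= n)%N -> exists2 c, 0 < c & D t = c * (V - vv t%:Z).
  by move=> t ht; apply: Dsign => //; apply: tsle; rewrite E lez_nat.
have FB : forall t, (n < t)%N -> D t < 0.
  by move=> t ht; apply: Dneg => //; apply: tsgt; rewrite E ltz_nat.
have FC : forall t, (t <= n)%N -> k < vv t%:Z.
  by move=> t ht; apply: vth_gt => //; apply: tsle; rewrite E lez_nat.
have FD : forall i j, (i <= j)%N -> D j <= D i.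
  by apply: chain_le => i; apply: Dmono.
have FE : k < V -> forall i j, (i < j)%N -> D j < D i.
  by move=> hkV; apply: chain_lt => i; apply: Dstrict.
have hDn : forall t, (t <= n)%N -> vv t%:Z < V -> 0 < D t.
  by move=> t ht hv; have [c hc ->] := FA t ht; rewrite pmulr_rgt0 // subr_gt0.
have hDn' : forall t, (t <= n)%N -> V < vv t%:Z -> D t < 0.
  by move=> t ht hv; have [c hc ->] := FA t ht; rewrite pmulr_rlt0 // subr_lt0.
have hD0 : forall t, (t <= n)%N -> V = vv t%:Z -> D t = 0.
  by move=> t ht hv; have [c hc ->] := FA t ht; rewrite hv subrr mulr0.
have Vneg : vv (0%:Z - 1) = 0 by rewrite /vv /vth.
have Vpred : forall s : nat, (s.+1%:Z - 1) = s%:Z.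
  by move=> s; rewrite -addn1 PoszD addrK.
split; [|split].
-
  move=> hv.
  have hdec : forall i, (i < n.+1)%N -> 0 < D i.
    move=> i hi; apply: lt_le_trans (hDn n (leqnn n) hv) (FD _ _ _); by [].
  have hinc : forall i, (n.+1 <= i)%N -> D i < 0 by move=> i hi; apply: FB.
  have eT : forall t : nat, (t%:Z = Order.min (Posz n + 1) (Posz B)) <-> t = minn n.+1 B.
    move=> t; have em : Order.min (Posz n + 1) (Posz B) = Posz (minn n.+1 B).
      rewrite (_ : Posz n + 1 = Posz n.+1); last by rewrite -addn1 PoszD.
      rewrite /Order.min; case: ifP => h.
      - have h2 : (n.+1 < B)%N by rewrite -ltz_nat.
        by rewrite (minn_idPl (ltnW h2)).
      - have h2 : (B <= n.+1)%N by rewrite leqNgt -ltz_nat h.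
        by rewrite (minn_idPr h2).
    rewrite em; split => [/eqP|->//]; by rewrite eqz_nat => /eqP.
  apply: myopic_red => //.
  + by move=> t /eT ->; apply: geq_minr.
  + move=> t ht; rewrite eT.
    exact: (strict_min hdec hinc ht).
-
  move=> th; rewrite lez_nat => hth hVth.
  have hkV : k < V by rewrite hVth; apply: FC.
  have hDth := hD0 th hth hVth.
  have hdec : forall i, (i < th)%N -> 0 < D i.
    by move=> i hi; rewrite -hDth; apply: FE.
  have hinc : forall i, (th < i)%N -> D i < 0.
    by move=> i hi; rewrite -hDth; apply: FE.
  apply: myopic_red => //.
  + by move=> t [->|->]; apply: geq_minr.
  + move=> t ht; exact: (tie_min hdec hDth hinc ht).
-
  move=> hle hne.
  have pattern : forall th, (th <= n)%N -> vv (th%:Z - 1) < V -> V < vv th%:Z ->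
      (forall i, (i < th)%N -> 0 < D i) /\ (forall i, (th <= i)%N -> D i < 0).
    move=> th hth h1 h2; split.
    + case: th hth h1 h2 => [//|s] hth h1 h2 i hi.
      rewrite Vpred in h1.
      have hs : (s <= n)%N by apply: ltnW.
      by apply: lt_le_trans (hDn s hs h1) (FD _ _ _).
    + by move=> i hi; apply: le_lt_trans (FD _ _ hi) (hDn' th hth h2).
  have hex : exists t, (t <= n)%N && (V < vv t%:Z).
    exists n; rewrite leqnn /= lt_neqAle hle andbT; apply/eqP; apply: hne.
    by rewrite lez_nat.
  case: (ex_minnP hex) => th /andP [hth hVth] hmin.
  have hlow : vv (th%:Z - 1) < V.
    case: th hth hVth hmin => [|s] hth hVth hmin; first by rewrite Vneg.
    rewrite Vpred lt_neqAle; apply/andP; split.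
      by apply/eqP => e; apply: (hne s); rewrite ?lez_nat ?e // ltnW.
    rewrite leNgt; apply/negP => hs.
    have := hmin s; rewrite (ltnW hth) hs => /(_ isT).
    by rewrite ltnn.
  have [hdec hinc] := pattern th hth hlow hVth.
  exists th; split => //.
  + move=> th'; rewrite lez_nat => hth' h1 h2.
    have [hdec' hinc'] := pattern th' hth' h1 h2.
    case: (ltngtP th' th) => // h.
    * by have := hdec th' h; rewrite ltNge (ltW (hinc' th' (leqnn _))).
    * by have := hdec' th h; rewrite ltNge (ltW (hinc th (leqnn _))).
  + apply: myopic_red => //.
    * by move=> t ->; apply: geq_minr.
    * move=> t ht; exact: (strict_min hdec hinc ht).
Qed.

End Helpers.

Theorem theorem1 (R : realType) (SA cTX phi lam V : R) (B : nat) :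
  0 < SA -> 0 < cTX -> 0 < phi -> (1 <= B)%N ->
  0 < lam -> lam <= lam_th (phi / cTX) SA ->
  0 < V -> V <= 1 ->
  let theta := phi / cTX in
  let ts := tstar lam SA in
  let v := vth lam theta SA in
  (* (i) *)
  (v ts < V ->
     myopic_char lam theta SA V B
       (fun t => t%:Z = Order.min (ts + 1) B%:Z)) /\
  (* (ii) *)
  (forall th : nat, th%:Z <= ts -> V = v th%:Z ->
     myopic_char lam theta SA V B
       (fun t => t = minn th.+1 B \/ t = minn th B)) /\
  (* (iii) *)
  (V <= v ts -> (forall th : nat, th%:Z <= ts -> V <> v th%:Z) ->
     exists th : nat,
       [/\ th%:Z <= ts, v (th%:Z - 1) < V /\ V < v th%:Z,
           (forall th' : nat, th'%:Z <= ts ->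
              v (th'%:Z - 1) < V -> V < v th'%:Z -> th' = th) &
           myopic_char lam theta SA V B (fun t => t = minn th B)]).
Proof.
move=> hSA hcTX hphi hB hl _ hV _.
have hth : 0 < phi / cTX by rewrite divr_gt0.
pose k := Num.sqrt (lam * (phi / cTX)).
have hk : 0 < k by rewrite /k sqrtr_gt0 mulr_gt0.
have hk2 : k ^+ 2 = lam * (phi / cTX).
  by apply: sqr_sqrtr; apply: mulr_ge0; apply: ltW.
have eth : phi / cTX = k^+2 / lam.
  rewrite hk2; change (phi / cTX = (lam * (phi / cTX)) / lam :> R).
  by field; rewrite !gt_eqF.
have := Helpers.main_k hSA hl hk hV hB.
by rewrite -eth.
Qed.
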